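(* Let $\Gamma=(V,E,m)$ be an even-labeled graph with $m_e=2\ell_e$, let $u\in V$ and let $k\ge 2$ be an integer. Let $\mathbb{A}_{\Gamma,u,k}$ be the kernel of the homomorphism $\alpha_{u,k}:\mathbb{A}_\Gamma\to\mathbb{Z}_k$ with $u\mapsto 1$ and $v\mapsto 0$ for $v\ne u$. Put $V_{2,u}=\{v\in V: \{u,v\}\in E,\ m_{\{u,v\}}=2\}$ and $W=V\setminus(\{u\}\cup V_{2,u})$. Then $\mathbb{A}_{\Gamma,u,k}$ is generated by the elements $$\bar u=u^k,\qquad v\ (v\in V_{2,u}),\qquad w_i=u^iwu^{-i}\ (w\in W,\ i=0,\dots,k-1),$$ and, regarding these as abstract letters, a complete set of defining relations is: (R1) $v\bar u=\bar u v$ for $v\in V_{2,u}$; (R2) $(vv')^{\ell_e}=(v'v)^{\ell_e}$ for $v,v'\in V_{2,u}$ with $e=\{v,v'\}\in E$; (R3) $(vw_i)^{\ell_e}=(w_iv)^{\ell_e}$ for $v\in V_{2,u}$, $w\in W$, $e=\{v,w\}\in E$, $i=0,\dots,k-1$; (R4) $(w_iw'_i)^{\ell_e}=(w'_iw_i)^{\ell_e}$ for $w,w'\in W$, $e=\{w,w'\}\in E$, $i=0,\dots,k-1$; (RB) for each $w\in W$ adjacent to $u$, with $e=\{u,w\}$, and each $i=0,\dots,k-1$: $$W_iW_{i+1}\cdots W_{i+\ell_e-1}=W_{i+1}W_{i+2}\cdots W_{i+\ell_e},$$ where for an integer $j\ge 0$ written $j=qk+s$ with $0\le s<k$ we set $W_j:=\bar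 u^{\,q}w_s\bar u^{-q}$.
   Context: Labeled graph $\Gamma=(V,E,m)$: finite simple graph with labels $m_e\in\mathbb{Z}_{\ge2}$; even if all labels are even. Artin group $\mathbb{A}_\Gamma=\langle v\in V\mid \langle uv\rangle^{m_e}=\langle vu\rangle^{m_e},\ \{u,v\}\in E\rangle$, where $\langle uv\rangle^m$ is the alternating word of length $m$ starting with $u$ (for $m=2\ell$ this is $(uv)^\ell=(vu)^\ell$); non-adjacent vertices impose no relation. Since all labels are even, $\alpha_{u,k}$ is a well-defined surjection; its kernel $\mathbb{A}_{\Gamma,u,k}$ is called a co-cyclic subgroup. The presentation above is called the standard presentation of $\mathbb{A}_{\Gamma,u,k}$. *)

(* Defs.v *)
(* Groups given by presentations are modelled concretely:
   elements are words over letters-with-signs, and equality in the presented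
   group is the group congruence generated by free cancellation and relators. *)
From HB Require Import structures.
From mathcomp Require Import all_boot all_order all_algebra.
Set Implicit Arguments. Unset Strict Implicit. Unset Printing Implicit Defensive.
Import GRing.Theory.

(* a signed letter: (x, false) = x, (x, true) = x^-1 *)
Definition word (T : Type) := seq (T * bool).

Definition linv (T : Type) (p : T * bool) : T * bool := (p.1, ~~ p.2).
Definition winv (T : Type) (w : word T) : word T := rev (map (@linv T) w).

Inductive gcong (T : Type) (R : word T -> word T -> Prop) : word T -> word T -> Prop :=
| geq_refl x : gcong R x x
| geq_sym x y : gcong R x y -> gcong R y x
| geq_trans x y z : gcong R x y -> gcong R y z -> gcong R x z
| geq_free (a b : word T) (p : T * bool) :
    gcong R (a ++ [:: p; linv p] ++ b) (a ++ b)
| geq_rel (a b r s : word T) : R r s -> gcong R (a ++ r ++ b) (a ++ s ++ b).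

Definition alt (T : Type) (a b : T) (n : nat) : word T :=
  mkseq (fun i => (if odd i then b else a, false)) n.

Definition wpow (T : Type) (w : seq T) (n : nat) : word T :=
  map (fun x => (x, false)) (flatten (nseq n w)).

Definition artin_rel (V : Type) (E : V -> V -> bool) (m : V -> V -> nat)
  (r s : word V) : Prop :=
  exists a b, E a b /\ r = alt a b (m a b) /\ s = alt b a (m a b).

Definition alpha (V : eqType) (u : V) (k : nat) (g : word V) : 'Z_k :=
  (\sum_(p <- g) (if p.1 == u then (if p.2 then -1 else 1) else 0 : 'Z_k))%R.

Definition V2u (V : eqType) (E : V -> V -> bool) (m : V -> V -> nat) (u v : V) : bool :=
  E u v && (m u v == 2).
Definition Wset (V : eqType) (E : V -> V -> bool) (m : V -> V -> nat) (u w : V) : bool :=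
  (w != u) && ~~ V2u E m u w.

(* abstract letters: ubar, v (v in V2u), w_i (w in W, i < k) *)
Inductive plet (V : Type) := Ubar | Vl of V | Wl of V & nat.
Arguments Ubar {V}.

Definition wf_letter (V : eqType) (E : V -> V -> bool) (m : V -> V -> nat)
  (u : V) (k : nat) (x : plet V) : bool :=
  match x with
  | Ubar => true
  | Vl v => V2u E m u v
  | Wl w i => Wset E m u w && (i < k)
  end.

Definition wf_word (V : eqType) (E : V -> V -> bool) (m : V -> V -> nat)
  (u : V) (k : nat) (x : word (plet V)) : bool :=
  all (fun p => wf_letter E m u k p.1) x.

Definition phiL (V : Type) (u : V) (k : nat) (x : plet V) : word V :=
  match x with
  | Ubar => nseq k (u, false)
  | Vl v => [:: (v, false)]
  | Wl w i => nseq i (u, false) ++ [:: (w, false)] ++ nseq i (u, true)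
  end.

Definition phi (V : Type) (u : V) (k : nat) (x : word (plet V)) : word V :=
  flatten (map (fun p => if p.2 then winv (phiL u k p.1) else phiL u k p.1) x).

Definition Wj (V : Type) (k : nat) (w : V) (j : nat) : word (plet V) :=
  nseq (j %/ k) (Ubar, false) ++ [:: (Wl w (j %% k), false)]
    ++ nseq (j %/ k) (Ubar, true).

(* the relations (R1),(R2),(R3),(R4),(RB); l_e = m_e / 2 *)
Definition pres_rel (V : eqType) (E : V -> V -> bool) (m : V -> V -> nat)
  (u : V) (k : nat) (r s : word (plet V)) : Prop :=
  (exists v, V2u E m u v /\
     r = [:: (Vl v, false); (Ubar, false)] /\ s = [:: (Ubar, false); (Vl v, false)])
  \/
  (exists v v', [/\ V2u E m u v, V2u E m u v', E v v',
     r = wpow [:: Vl v; Vl v'] (m v v')./2 & s = wpow [:: Vl v'; Vl v] (m v v')./2])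
  \/
  (exists v w i, [/\ V2u E m u v, Wset E m u w, E v w, i < k &
     r = wpow [:: Vl v; Wl w i] (m v w)./2 /\ s = wpow [:: Wl w i; Vl v] (m v w)./2])
  \/
  (exists w w' i, [/\ Wset E m u w, Wset E m u w', E w w', i < k &
     r = wpow [:: Wl w i; Wl w' i] (m w w')./2 /\ s = wpow [:: Wl w' i; Wl w i] (m w w')./2])
  \/
  (exists w i, [/\ Wset E m u w, E u w, i < k,
     r = flatten [seq Wj k w j | j <- iota i (m u w)./2]
   & s = flatten [seq Wj k w j | j <- iota i.+1 (m u w)./2]]).

(* Main.v *)
Require Import Defs.
From HB Require Import structures.
From mathcomp Require Import all_boot all_order all_algebra.
Set Implicit Arguments. Unset Strict Implicit. Unset Printing Implicit Defensive.

Section Generic.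
Variables (T : Type) (R : word T -> word T -> Prop).

Lemma gc_ctx a b x y : gcong R x y -> gcong R (a ++ x ++ b) (a ++ y ++ b).
Proof.
elim=> {x y}.
- by move=> x; apply: geq_refl.
- by move=> x y _ IH; apply: geq_sym.
- by move=> x y z _ I1 _ I2; apply: geq_trans I2.
- move=> a' b' p.
  have := @geq_free T R (a ++ a') (b' ++ b) p.
  by rewrite -!catA.
- move=> a' b' r s H.
  have := @geq_rel T R (a ++ a') (b' ++ b) r s H.
  by rewrite -!catA.
Qed.

Lemma gc_l a x y : gcong R x y -> gcong R (a ++ x) (a ++ y).
Proof. by move=> H; have := gc_ctx a [::] H; rewrite !cats0. Qed.

Lemma gc_r b x y : gcong R x y -> gcong R (x ++ b) (y ++ b).
Proof. by move=> H; have := gc_ctx [::] b H. Qed.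

Lemma gc_cat a a' b b' : gcong R a a' -> gcong R b b' -> gcong R (a ++ b) (a' ++ b').
Proof.
move=> H1 H2; apply: geq_trans (gc_r b H1) _; exact: gc_l.
Qed.

Lemma linvK (p : T * bool) : @linv T (@linv T p) = p.
Proof. by case: p => x []. Qed.

Lemma winv_cons (p : T * bool) (x : word T) : winv (p :: x) = winv x ++ [:: linv p].
Proof. by rewrite /winv /= rev_cons cats1. Qed.

Lemma winv_cat (x y : word T) : winv (x ++ y) = winv y ++ winv x.
Proof. by rewrite /winv map_cat rev_cat. Qed.

Lemma winvK (x : word T) : winv (winv x) = x.
Proof. rewrite /winv map_rev revK -map_comp; elim: x => [|p x IH] //=; by rewrite IH linvK. Qed.

Lemma gc_free_pair (p : T * bool) : gcong R [:: p; linv p] [::].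
Proof. by have := @geq_free T R [::] [::] p; rewrite cats0. Qed.

Lemma gc_inv_r (x : word T) : gcong R (x ++ winv x) [::].
Proof.
elim: x => [|p x IH] /=; first exact: geq_refl.
rewrite winv_cons.
have := gc_ctx [:: p] [:: linv p] IH => /= H.
apply: geq_trans (gc_free_pair p).
by rewrite -!catA /= in H *.
Qed.

Lemma gc_inv_l (x : word T) : gcong R (winv x ++ x) [::].
Proof. by have := gc_inv_r (winv x); rewrite winvK. Qed.

Lemma gc_cancel (a x b : word T) : gcong R (a ++ x ++ winv x ++ b) (a ++ b).
Proof. by have := gc_ctx a b (gc_inv_r x); rewrite /= -catA. Qed.
Lemma gc_trans (y x z : word T) : gcong R x y -> gcong R y z -> gcong R x z.
Proof. exact: geq_trans. Qed.
End Generic.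
Arguments gc_trans {T R} y {x z}.

Section Main.
Variables (V : finType) (E : rel V) (m : V -> V -> nat) (u : V) (k : nat).
Hypotheses (HEsym : symmetric E) (HEirr : irreflexive E)
  (Hmsym : forall a b, m a b = m b a)
  (Hmeven : forall a b, E a b -> 2 <= m a b /\ ~~ odd (m a b))
  (hk : 2 <= k).

Local Notation AG := (gcong (artin_rel E m)).
Local Notation PG := (gcong (pres_rel E m u k)).
Local Notation U := (u, false).
Local Notation Ui := (u, true).

Lemma phi_cat x y : phi u k (x ++ y) = phi u k x ++ phi u k y.
Proof. by rewrite /phi map_cat flatten_cat. Qed.

Lemma phi_cons p x : phi u k (p :: x) =
  (if p.2 then winv (phiL u k p.1) else phiL u k p.1) ++ phi u k x.
Proof. by []. Qed.

Lemma winv_nseq (a : V) n : winv (nseq n (a, false)) = nseq n (a, true).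
Proof. by rewrite /winv map_nseq rev_nseq. Qed.

Lemma winv_nseq' (a : V) n : winv (nseq n (a, true)) = nseq n (a, false).
Proof. by rewrite /winv map_nseq rev_nseq. Qed.

Lemma nseqS_r (T : Type) (a : T) n : nseq n.+1 a = nseq n a ++ [:: a].
Proof. by elim: n => //= n <-. Qed.

Lemma nseqD (T : Type) (a : T) n1 n2 : nseq (n1 + n2) a = nseq n1 a ++ nseq n2 a.
Proof. by elim: n1 => //= n ->. Qed.

Lemma V2u_neq v : V2u E m u v -> v != u.
Proof. by case/andP=> Euv _; apply/eqP => Evu; rewrite Evu HEirr in Euv. Qed.

Lemma V2u_comm v : V2u E m u v -> AG [:: U; (v, false)] [:: (v, false); U].
Proof.
case/andP=> Euv /eqP m2.
have := @geq_rel _ (artin_rel E m) [::] [::] (alt u v (m u v)) (alt v u (m u v)).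
rewrite !cats0 /= m2; apply.
by exists u, v; rewrite m2.
Qed.

Lemma V2u_comm_b v b : V2u E m u v -> AG [:: U; (v, b)] [:: (v, b); U].
Proof.
move=> Hv; case: b; last exact: V2u_comm.
(* u v^- ~ v^- v u v^- ~ v^- u v v^- ~ v^- u *)
apply: (gc_trans ([:: (v,true)] ++ [:: (v, false); U] ++ [:: (v,true)])).
  have := @geq_free _ (artin_rel E m) [::] [:: U; (v,true)] (v,true).
  by move=> H; apply: geq_sym; exact: H.
apply: (gc_trans ([:: (v,true)] ++ [:: U; (v, false)] ++ [:: (v,true)])).
  apply: gc_ctx; apply: geq_sym; exact: V2u_comm.
have := @geq_free _ (artin_rel E m) [:: (v,true); U] [::] (v,false).
by rewrite cats0.
Qed.

Lemma V2u_comm_n v b n : V2u E m u v ->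
  AG (nseq n U ++ [:: (v, b)]) ([:: (v, b)] ++ nseq n U).
Proof.
move=> Hv; elim: n => [|n IH] /=; first exact: geq_refl.
apply: (gc_trans ([:: U] ++ [:: (v,b)] ++ nseq n U)).
  exact: (gc_l [:: U] IH).
have := gc_ctx [::] (nseq n U) (V2u_comm_b b Hv).
by rewrite /=.
Qed.

Lemma V2u_conj v b n : V2u E m u v ->
  AG (nseq n U ++ [:: (v, b)] ++ nseq n Ui) [:: (v, b)].
Proof.
move=> Hv.
apply: (gc_trans (([:: (v, b)] ++ nseq n U) ++ nseq n Ui)).
  rewrite catA; apply: gc_r; exact: V2u_comm_n.
rewrite -catA -(winv_nseq u n).
by have := gc_cancel (T:=V) (artin_rel E m) [:: (v,b)] (nseq n U) [::]; rewrite !cats0.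
Qed.

Definition af (p : V * bool) : 'Z_k :=
  (if p.1 == u then (if p.2 then -1 else 1) else 0)%R.

Lemma alpha_cat x y : alpha u k (x ++ y) = (alpha u k x + alpha u k y)%R.
Proof. by rewrite /alpha big_cat. Qed.

Lemma alpha_cons p x : alpha u k (p :: x) = (af p + alpha u k x)%R.
Proof. by rewrite /alpha big_cons. Qed.

Lemma alpha_nil : alpha u k [::] = 0%R.
Proof. by rewrite /alpha big_nil. Qed.

Lemma alpha_nseqU n : alpha u k (nseq n U) = (n%:R)%R.
Proof.
elim: n => [|n IH]; first by rewrite alpha_nil.
by rewrite /= alpha_cons IH /af eqxx /= GRing.mulrS.
Qed.

Lemma alpha_nseqUi n : alpha u k (nseq n Ui) = (- n%:R)%R.
Proof.
elim: n => [|n IH]; first by rewrite alpha_nil GRing.oppr0.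
by rewrite /= alpha_cons IH /af eqxx /= GRing.mulrS GRing.opprD.
Qed.

Lemma alpha_winv x : alpha u k (winv x) = (- alpha u k x)%R.
Proof.
elim: x => [|p x IH]; first by rewrite /winv /= alpha_nil GRing.oppr0.
rewrite winv_cons alpha_cat IH (alpha_cons p x) GRing.opprD [in RHS]GRing.addrC; congr (_ + _)%R.
rewrite alpha_cons alpha_nil GRing.addr0 /af /linv /=.
by case: (p.1 == u); case: p.2 => /=; rewrite ?GRing.opprK ?GRing.oppr0.
Qed.

Lemma alpha_single (w : V) b : w != u -> alpha u k [:: (w, b)] = 0%R.
Proof. by move=> /negPf H; rewrite alpha_cons alpha_nil /af /= H GRing.addr0. Qed.

Lemma alpha_phiL x : wf_letter E m u k x -> alpha u k (phiL u k x) = 0%R.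
Proof.
case: x => [|v|w i] /=.
- by rewrite alpha_nseqU pchar_Zp.
- by move=> Hv; apply: alpha_single; exact: V2u_neq.
- case/andP => /andP[Hw _] _.
  rewrite alpha_cat -cat1s alpha_cat alpha_nseqU alpha_nseqUi alpha_single //.
  by rewrite GRing.add0r GRing.subrr.
Qed.

Lemma part1 x : wf_word E m u k x -> alpha u k (phi u k x) = 0%R.
Proof.
elim: x => [|p x IH] /=; first by rewrite alpha_nil.
case/andP => Hp Hx; rewrite phi_cons alpha_cat IH // GRing.addr0.
case: p.2; rewrite ?alpha_winv alpha_phiL // ?GRing.oppr0 //.
Qed.


Definition step (c : nat) (p : V * bool) : word (plet V) * nat :=
  if p.1 == u then
    (if p.2 then (if 0 < c then ([::], c.-1) else ([:: (Ubar, true)], k.-1))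
     else (if c.+1 < k then ([::], c.+1) else ([:: (Ubar, false)], 0)))
  else if V2u E m u p.1 then ([:: (Vl p.1, p.2)], c) else ([:: (Wl p.1 c, p.2)], c).

Fixpoint rho (c : nat) (g : word V) : word (plet V) :=
  if g is p :: g' then (step c p).1 ++ rho (step c p).2 g' else [::].

Fixpoint fin (c : nat) (g : word V) : nat :=
  if g is p :: g' then fin (step c p).2 g' else c.

Lemma rho_cat c x y : rho c (x ++ y) = rho c x ++ rho (fin c x) y.
Proof. by elim: x c => [|p x IH] c //=; rewrite IH catA. Qed.

Lemma fin_cat c x y : fin c (x ++ y) = fin (fin c x) y.
Proof. by elim: x c => [|p x IH] c //=. Qed.

Lemma step_lt c p : c < k -> (step c p).2 < k.
Proof.
move=> ck; rewrite /step; case: eqP => _ /=; last by case: (V2u _ _ _ _).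
case: p.2 => /=.
- case: ifP => //= _; [exact: leq_ltn_trans (leq_pred c) ck | by rewrite prednK // ltnW].
- by case: ifP => //= _; rewrite ltnW.
Qed.

Lemma fin_lt c g : c < k -> fin c g < k.
Proof. by elim: g c => [|p g IH] c ck //=; apply: IH; exact: step_lt. Qed.

Lemma Wset_E w : w != u -> ~~ V2u E m u w -> Wset E m u w.
Proof. by move=> H1 H2; rewrite /Wset H1 H2. Qed.

Lemma step_wf c p : c < k -> wf_word E m u k (step c p).1.
Proof.
move=> ck; rewrite /step; case: eqP => Hp.
  by case: p.2; case: ifP.
case: ifP => HV /=; first by rewrite HV.
by rewrite /= /Wset HV ck /= !andbT; apply/eqP.
Qed.

Lemma wf_cat x y : wf_word E m u k (x ++ y) = wf_word E m u k x && wf_word E m u k y.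
Proof. by rewrite /wf_word all_cat. Qed.

Lemma rho_wf c g : c < k -> wf_word E m u k (rho c g).
Proof.
elim: g c => [|p g IH] c ck //=.
by rewrite wf_cat step_wf // IH // step_lt.
Qed.

Lemma natZk_k : ((k%:R)%R : 'Z_k) = 0%R.
Proof. exact: pchar_Zp. Qed.

Lemma step_alpha c p : c < k ->
  ((((step c p).2)%:R)%R : 'Z_k) = (c%:R + af p)%R.
Proof.
move=> ck; rewrite /step /af; case: eqP => Hp /=; last first.
  by case: (V2u _ _ _ _); rewrite GRing.addr0.
case: p.2 => /=.
- case: c ck => [|c] ck /=.
    rewrite GRing.add0r; apply/eqP; rewrite -GRing.subr_eq0 GRing.opprK.
    by rewrite -GRing.mulrSr prednK ?natZk_k // ltnW.
  by rewrite GRing.mulrSr GRing.addrK.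
- case: ifP => H ; first by rewrite GRing.mulrSr.
  have Hck : c.+1 = k by apply/eqP; rewrite eqn_leq ck leqNgt H.
  by rewrite -GRing.mulrSr Hck natZk_k.
Qed.

Lemma fin_alpha c g : c < k ->
  (((fin c g)%:R)%R : 'Z_k) = (c%:R + alpha u k g)%R.
Proof.
elim: g c => [|p g IH] c ck /=; first by rewrite alpha_nil GRing.addr0.
by rewrite IH ?step_lt // step_alpha // alpha_cons GRing.addrA.
Qed.

Lemma phiW_b w c b : (if b then winv (phiL u k (Wl w c)) else phiL u k (Wl w c))
   = nseq c U ++ [:: (w, b)] ++ nseq c Ui.
Proof.
case: b => //=.
by rewrite winv_cat winv_cons winv_nseq' winv_nseq -catA.
Qed.

Lemma phi_single x b : phi u k [:: (x, b)] =
  (if b then winv (phiL u k x) else phiL u k x).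
Proof. by rewrite phi_cons /= cats0. Qed.

Lemma step_AG c p : c < k ->
  AG (nseq c U ++ [:: p]) (phi u k (step c p).1 ++ nseq (step c p).2 U).
Proof.
move=> ck; case: p => x b; rewrite /step /=.
case: eqP => [->|Hx].
  case: b => /=.
  - case: c ck => [|c] ck /=.
    + rewrite phi_single /= winv_nseq.
      rewrite -(prednK (ltnW hk)) /= -(winv_nseq u).
      have := gc_ctx [:: Ui] [::] (gc_inv_l (artin_rel E m) (nseq k.-1 U)).
      by rewrite cats0 => H; apply: geq_sym.
    + change (AG (nseq c.+1 U ++ [:: Ui]) (nseq c U)).
      rewrite nseqS_r -catA /=.
      have := @geq_free _ (artin_rel E m) (nseq c U) [::] U.
      by rewrite /linv /= cats0.
  - case: ifP => H; first by rewrite -nseqS_r; exact: geq_refl.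
    have Hck : c.+1 = k by apply/eqP; rewrite eqn_leq ck leqNgt H.
    by rewrite phi_single /= -Hck nseqS_r !cats0; exact: geq_refl.
case: ifP => HV.
  rewrite phi_single /=.
  have -> : (if b then winv [:: (x, false)] else [:: (x, false)]) = [:: (x, b)] by case: b.
  exact: V2u_comm_n.
rewrite phi_single phiW_b -!catA.
apply: gc_l; apply: geq_sym; rewrite -(winv_nseq u).
have := gc_cancel (T:=V) (artin_rel E m) [:: (x, b)] (winv (nseq c U)) [::].
by rewrite winvK !cats0.
Qed.

Lemma rho_AG c g : c < k ->
  AG (nseq c U ++ g) (phi u k (rho c g) ++ nseq (fin c g) U).
Proof.
elim: g c => [|p g IH] c ck /=; first by rewrite cats0; exact: geq_refl.
rewrite -cat1s phi_cat -catA.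
apply: (gc_trans ((phi u k (step c p).1 ++ nseq (step c p).2 U) ++ g)).
  by rewrite catA; apply: gc_r; exact: step_AG.
rewrite -catA; apply: gc_l; apply: IH; exact: step_lt.
Qed.

Lemma part2 g : alpha u k g = 0%R ->
  exists x, wf_word E m u k x /\ AG g (phi u k x).
Proof.
move=> Ha; exists (rho 0 g); split; first by apply: rho_wf; exact: ltnW.
have k0 : 0 < k by exact: ltnW.
have Hf : fin 0 g = 0.
  have := fin_alpha g k0; rewrite Ha GRing.addr0 => H.
  have := val_Zp_nat hk (fin 0 g); rewrite H.
  by rewrite modn_small ?fin_lt.
by have := rho_AG g k0; rewrite Hf /= cats0.
Qed.

Definition cj (i : nat) (s : word V) : word V := nseq i U ++ s ++ nseq i Ui.

Lemma cj_cat i a b : AG (cj i a ++ cj i b) (cj i (a ++ b)).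
Proof.
rewrite /cj -!catA.
have := gc_cancel (artin_rel E m) (nseq i U ++ a) (nseq i Ui) (b ++ nseq i Ui).
by rewrite winv_nseq' -!catA.
Qed.

Lemma cj_nil i : AG (cj i [::]) [::].
Proof. by rewrite /cj /= -winv_nseq; exact: gc_inv_r. Qed.

Lemma cj_AG i a b : AG a b -> AG (cj i a) (cj i b).
Proof. by move=> H; apply: gc_ctx. Qed.

Lemma alt2 (a b : V) n : alt a b n.+2 = (a, false) :: (b, false) :: alt a b n.
Proof.
rewrite /alt /mkseq /=; congr (_ :: _ :: _).
rewrite -[2]/(2 + 0) iotaDl -map_comp; apply: eq_map => j /=.
by rewrite add0n negbK.
Qed.

Lemma alt_wpow (a b : V) n : alt a b n.*2 = wpow [:: a; b] n.
Proof. by elim: n => [|n IH] //; rewrite doubleS alt2 IH. Qed.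

Lemma alt_m (a b : V) : E a b -> alt a b (m a b) = wpow [:: a; b] (m a b)./2.
Proof. by move=> Hab; rewrite -alt_wpow even_halfK //; case: (Hmeven Hab). Qed.

Lemma art (a b : V) : E a b -> AG (alt a b (m a b)) (alt b a (m a b)).
Proof.
move=> Hab.
have := @geq_rel _ (artin_rel E m) [::] [::] (alt a b (m a b)) (alt b a (m a b)).
by rewrite !cats0; apply; exists a, b.
Qed.

Lemma art_w (a b : V) : E a b ->
  AG (wpow [:: a; b] (m a b)./2) (wpow [:: b; a] (m a b)./2).
Proof.
move=> Hab; rewrite -alt_m // -alt_wpow even_halfK; first exact: art.
by case: (Hmeven Hab).
Qed.

Lemma wpow_S (T : Type) (a b : T) n :
  wpow [:: a; b] n.+1 = (a, false) :: (b, false) :: wpow [:: a; b] n.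
Proof. by []. Qed.

Lemma phi_wpow2 (x1 x2 : plet V) (f1 f2 : V) i n :
  AG (phiL u k x1) (cj i [:: (f1, false)]) ->
  AG (phiL u k x2) (cj i [:: (f2, false)]) ->
  AG (phi u k (wpow [:: x1; x2] n)) (cj i (wpow [:: f1; f2] n)).
Proof.
move=> H1 H2; elim: n => [|n IH].
  by apply: geq_sym; exact: cj_nil.
rewrite wpow_S wpow_S !phi_cons /=.
apply: (gc_trans (cj i [:: (f1, false)] ++ cj i [:: (f2, false)] ++ cj i (wpow [:: f1; f2] n))).
  by apply: gc_cat => //; apply: gc_cat.
apply: (gc_trans (cj i [:: (f1, false)] ++ cj i ([:: (f2, false)] ++ wpow [:: f1; f2] n))).
  by apply: gc_l; exact: cj_cat.
exact: cj_cat.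
Qed.

Lemma phiV i v : V2u E m u v -> AG (phiL u k (Vl v)) (cj i [:: (v, false)]).
Proof. by move=> Hv; apply: geq_sym; exact: V2u_conj. Qed.

Lemma phiWl i w : AG (phiL u k (Wl w i)) (cj i [:: (w, false)]).
Proof. exact: geq_refl. Qed.

Lemma pres_wpow (x1 x2 : plet V) (f1 f2 : V) i :
  E f1 f2 ->
  AG (phiL u k x1) (cj i [:: (f1, false)]) ->
  AG (phiL u k x2) (cj i [:: (f2, false)]) ->
  AG (phi u k (wpow [:: x1; x2] (m f1 f2)./2)) (phi u k (wpow [:: x2; x1] (m f1 f2)./2)).
Proof.
move=> Hf H1 H2.
apply: (gc_trans (cj i (wpow [:: f1; f2] (m f1 f2)./2))); first exact: phi_wpow2.
apply: (gc_trans (cj i (wpow [:: f2; f1] (m f1 f2)./2))).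
  by apply: cj_AG; exact: art_w.
by apply: geq_sym; exact: phi_wpow2.
Qed.

Lemma phi_nseqUbar q : phi u k (nseq q (Ubar, false)) = nseq (q * k) U.
Proof.
elim: q => [|q IH] //=; rewrite phi_cons IH /= mulSn nseqD //.
Qed.

Lemma phi_nseqUbari q : phi u k (nseq q (Ubar, true)) = nseq (q * k) Ui.
Proof.
elim: q => [|q IH] //=; rewrite phi_cons IH /= winv_nseq mulSn nseqD //.
Qed.

Lemma phi_Wj w j : phi u k (Wj k w j) = cj j [:: (w, false)].
Proof.
rewrite /Wj !phi_cat phi_nseqUbar phi_nseqUbari phi_single /= /cj.
have Hj := divn_eq j k; set q := j %/ k in Hj *; set s := j %% k in Hj *.
rewrite [in RHS]Hj nseqD [in nseq (_ + _) Ui]addnC nseqD -!catA //.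
Qed.

Lemma wpow_shift (a b : V) l :
  (a, false) :: wpow [:: b; a] l = wpow [:: a; b] l ++ [:: (a, false)].
Proof. by elim: l => [|l IH] //; rewrite !wpow_S /= -IH. Qed.

Lemma wpow_shift' (a b : V) l (rest : word V) :
  (a, false) :: (wpow [:: b; a] l ++ rest) = wpow [:: a; b] l ++ (a, false) :: rest.
Proof. by rewrite -cat_cons wpow_shift -catA. Qed.

Lemma phi_flatten_Wj w l j :
  AG (phi u k (flatten [seq Wj k w j | j <- iota j l]))
     (nseq j U ++ wpow [:: w; u] l ++ nseq (j + l) Ui).
Proof.
elim: l j => [|l IH] j /=.
  rewrite addn0 -winv_nseq; apply: geq_sym; exact: gc_inv_r.
rewrite phi_cat phi_Wj.
apply: (gc_trans (cj j [:: (w, false)] ++ (nseq j.+1 U ++ wpow [:: w; u] l ++ nseq (j.+1 + l) Ui))).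
  exact: gc_l.
rewrite /cj nseqS_r -!catA.
have := gc_cancel (artin_rel E m) (nseq j U ++ [:: (w, false)]) (nseq j Ui)
   ([:: U] ++ wpow [:: w; u] l ++ nseq (j.+1 + l) Ui).
by rewrite winv_nseq' -!catA addSnnS.
Qed.

Lemma RB_AG w i : E u w ->
  AG (phi u k (flatten [seq Wj k w j | j <- iota i (m u w)./2]))
     (phi u k (flatten [seq Wj k w j | j <- iota i.+1 (m u w)./2])).
Proof.
move=> Huw; set l := (m u w)./2.
apply: (gc_trans (nseq i U ++ wpow [:: w; u] l ++ nseq (i + l) Ui)).
  exact: phi_flatten_Wj.
apply: geq_sym.
apply: (gc_trans (nseq i.+1 U ++ wpow [:: w; u] l ++ nseq (i.+1 + l) Ui)).
  exact: phi_flatten_Wj.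
rewrite nseqS_r addSn /= -!catA /= wpow_shift'.
apply: gc_l.
apply: (gc_trans (wpow [:: u; w] l ++ nseq (i + l) Ui)).
  have := @geq_free _ (artin_rel E m) (wpow [:: u; w] l) (nseq (i + l) Ui) U.
  by rewrite /linv /=.
apply: gc_r; rewrite /l; exact: art_w.
Qed.

Lemma phi_PG x y : PG x y -> AG (phi u k x) (phi u k y).
Proof.
elim=> {x y}.
- move=> x; exact: geq_refl.
- by move=> x y _ H; apply: geq_sym.
- by move=> x y z _ H1 _ H2; apply: geq_trans H2.
- move=> a b p; rewrite !phi_cat !phi_cons /= cats0.
  case: p => x [] /=.
  + rewrite -catA; have := gc_cancel (artin_rel E m) (phi u k a) (winv (phiL u k x)) (phi u k b).
    by rewrite winvK.
  + rewrite -catA; exact: gc_cancel.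
- move=> a b r s H; rewrite !phi_cat; apply: gc_ctx.
  case: H => [[v [Hv [-> ->]]] | [[v [v' [Hv Hv' Hvv' -> ->]]] |
             [[v [w [i [Hv Hw Hvw Hi [-> ->]]]]] | [[w [w' [i [Hw Hw' Hww' Hi [-> ->]]]]] |
              [w [i [Hw Huw Hi -> ->]]]]]]].
  + rewrite !phi_cons /= !cats0.
    by have := V2u_comm_n false k Hv; move=> H; apply: geq_sym.
  + by apply: (pres_wpow (i := 0)) => //; apply: phiV.
  + by apply: (pres_wpow (i := i)) => //; [apply: phiV | apply: phiWl].
  + by apply: (pres_wpow (i := i)) => //; apply: phiWl.
  + exact: RB_AG.
Qed.

Lemma k0 : 0 < k. Proof. exact: ltnW. Qed.

Lemma rho_nseqU c n : c + n < k -> rho c (nseq n U) = [::] /\ fin c (nseq n U) = c + n.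
Proof.
elim: n c => [|n IH] c H /=; first by rewrite addn0.
rewrite /step /= eqxx /=.
have H1 : c.+1 < k by apply: leq_ltn_trans H; rewrite addnS ltnS leq_addr.
rewrite H1 /=; rewrite addnS -addSn in H; have [-> ->] := IH _ H.
by rewrite addSnnS.
Qed.

Lemma rho_nseqUi c n : n <= c -> rho c (nseq n Ui) = [::] /\ fin c (nseq n Ui) = c - n.
Proof.
elim: n c => [|n IH] c H /=; first by rewrite subn0.
rewrite /step /= eqxx /=.
have H1 : 0 < c by apply: leq_trans H.
rewrite H1 /=.
have H2 : n <= c.-1 by rewrite -ltnS prednK.
have [-> ->] := IH _ H2.
by rewrite -subn1 -subnDA add1n.
Qed.

Lemma step_nonu c x b : x != u ->
  step c (x, b) = ([:: ((if V2u E m u x then Vl x else Wl x c), b)], c).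
Proof. by move=> /negPf H; rewrite /step /= H; case: ifP. Qed.

Lemma rho_letter p : wf_letter E m u k p.1 ->
  let S := (if p.2 then winv (phiL u k p.1) else phiL u k p.1) in
  rho 0 S = [:: p] /\ fin 0 S = 0.
Proof.
case: p => x b /=; case: x => [|v|w i] /=.
- move=> _; case: b.
  + rewrite winv_nseq -(prednK k0) /= /step /= eqxx /=.
    have [-> ->] := rho_nseqUi (leqnn k.-1).
    by rewrite subnn.
  + rewrite -(prednK k0) nseqS_r rho_cat fin_cat.
    have [-> ->] := rho_nseqU (c:=0) (n:=k.-1) ltac:(by rewrite add0n prednK // k0).
    by rewrite /= /step /= eqxx /= prednK ?k0 // ltnn.
- move=> Hv; have Hne := V2u_neq Hv.
  have -> : (if b then winv [:: (v, false)] else [:: (v, false)]) = [:: (v, b)] by case: b.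
  by rewrite /= step_nonu // Hv.
- case/andP => /andP[Hw HV] Hi.
  rewrite (phiW_b w i b) rho_cat fin_cat.
  have [-> ->] := rho_nseqU (c:=0) (n:=i) ltac:(by rewrite add0n).
  rewrite add0n /= step_nonu // (negPf HV) /=.
  have [-> ->] := rho_nseqUi (leqnn i).
  by rewrite subnn.
Qed.

Lemma rho_phi x : wf_word E m u k x -> rho 0 (phi u k x) = x /\ fin 0 (phi u k x) = 0.
Proof.
elim: x => [|p x IH] //=.
case/andP => Hp Hx; rewrite phi_cons rho_cat fin_cat.
have [-> ->] := rho_letter Hp.
by have [-> ->] := IH Hx.
Qed.

Lemma PG_rel r s : pres_rel E m u k r s -> PG r s.
Proof.
move=> H; have := @geq_rel _ (pres_rel E m u k) [::] [::] r s H.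
by rewrite !cats0.
Qed.

Lemma rho_free c p : c < k ->
  fin c [:: p; linv p] = c /\ PG (rho c [:: p; linv p]) [::].
Proof.
move=> ck; case: p => x b; rewrite /linv /=.
case: (eqVneq x u) => [->|Hx].
  rewrite /step /= eqxx /=.
  case: b => /=.
  - case: c ck => [|c] ck /=.
    + rewrite prednK ?k0 // ltnn /=; split=> //.
      exact: (gc_free_pair _ (Ubar, true)).
    + by rewrite ck; split=> //; exact: geq_refl.
  - case H: (c.+1 < k) => /=; first by split=> //; exact: geq_refl.
    have Hck : c.+1 = k by apply/eqP; rewrite eqn_leq ck leqNgt H.
    split; first by rewrite -Hck.
    exact: (gc_free_pair _ (Ubar, false)).
rewrite !step_nonu //=; split=> //.
case: ifP => _.
  exact: (gc_free_pair _ (Vl x, b)).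
exact: (gc_free_pair _ (Wl x c, b)).
Qed.

Definition lt_ (c : nat) (x : V) : plet V := if V2u E m u x then Vl x else Wl x c.

Lemma rho_wpow_nonu a b c n : a != u -> b != u ->
  rho c (wpow [:: a; b] n) = wpow [:: lt_ c a; lt_ c b] n /\ fin c (wpow [:: a; b] n) = c.
Proof.
move=> Ha Hb; elim: n => [|n [IH1 IH2]] //.
by rewrite !wpow_S /= !step_nonu //= IH1 IH2.
Qed.

Lemma alt_even a b : E a b -> alt a b (m a b) = wpow [:: a; b] (m a b)./2.
Proof. exact: alt_m. Qed.

Lemma alt_even' a b : E a b -> alt b a (m a b) = wpow [:: b; a] (m a b)./2.
Proof. by move=> Hab; rewrite -alt_wpow even_halfK //; case: (Hmeven Hab). Qed.

Lemma rho_alt_nonu a b c : E a b -> a != u -> b != u -> c < k ->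
  fin c (alt a b (m a b)) = fin c (alt b a (m a b)) /\
  PG (rho c (alt a b (m a b))) (rho c (alt b a (m a b))).
Proof.
move=> Hab Ha Hb ck.
rewrite alt_even // alt_even' //.
have [-> ->] := rho_wpow_nonu c ((m a b)./2) Ha Hb.
have [-> ->] := rho_wpow_nonu c ((m a b)./2) Hb Ha.
split=> //; rewrite /lt_.
case: ifP => Va; case: ifP => Vb.
- by apply: PG_rel; right; left; exists a, b.
- apply: PG_rel.
  by right; right; left; exists a, b, c; split=> //; apply: Wset_E => //; rewrite Vb.
- apply: geq_sym; apply: PG_rel; rewrite Hmsym.
  right; right; left; exists b, a, c; split=> //; first by apply: Wset_E => //; rewrite Va.
  by rewrite HEsym.
- apply: PG_rel; right; right; right; left; exists a, b, c.
  by split=> //; apply: Wset_E => //; rewrite ?Va ?Vb.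
Qed.

Local Notation Ub := (@Ubar V, false).
Local Notation Ubi := (@Ubar V, true).

Lemma stepU j : (step (j %% k) U).2 = j.+1 %% k /\
  nseq (j %/ k) Ub ++ (step (j %% k) U).1 = nseq (j.+1 %/ k) Ub.
Proof.
rewrite /step /= eqxx /=.
have Hs := ltn_pmod j k0.
have Hj1 : j.+1 = j %/ k * k + (j %% k).+1 by rewrite {1}(divn_eq j k) addnS.
case H: ((j %% k).+1 < k) => /=.
  rewrite Hj1; split; first by rewrite modnMDl (modn_small H).
  by rewrite divnMDl ?k0 // (divn_small H) addn0 cats0.
have Hsk : (j %% k).+1 = k by apply/eqP; rewrite eqn_leq Hs leqNgt H.
rewrite Hj1 Hsk -mulSnr modnMl mulnK ?k0 //.
by rewrite nseqS_r.
Qed.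

Lemma stepW w j : w != u -> ~~ V2u E m u w ->
  step (j %% k) (w, false) = ([:: (Wl w (j %% k), false)], j %% k).
Proof. by move=> Hw HV; rewrite step_nonu // (negPf HV). Qed.

Lemma Wj_swap w j (rest : word (plet V)) :
  PG (nseq (j %/ k) Ub ++ (Wl w (j %% k), false) :: rest)
     (Wj k w j ++ nseq (j %/ k) Ub ++ rest).
Proof.
rewrite /Wj -!catA; apply: geq_sym.
have := gc_cancel (pres_rel E m u k) (nseq (j %/ k) Ub ++ [:: (Wl w (j %% k), false)])
   (nseq (j %/ k) Ubi) rest.
have -> : winv (nseq (j %/ k) Ubi) = nseq (j %/ k) Ub by rewrite /winv map_nseq rev_nseq.
by rewrite -!catA.
Qed.

Lemma L_wu w : w != u -> ~~ V2u E m u w -> forall l j,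
  fin (j %% k) (wpow [:: w; u] l) = (j + l) %% k /\
  PG (nseq (j %/ k) Ub ++ rho (j %% k) (wpow [:: w; u] l))
     (flatten [seq Wj k w i | i <- iota j l] ++ nseq ((j + l) %/ k) Ub).
Proof.
move=> Hw HV; elim=> [|l IH] j.
  by rewrite addn0 /= cats0; split=> //; exact: geq_refl.
rewrite wpow_S /= stepW //=.
have [E1 E2] := stepU j.
have [F1 P1] := IH j.+1.
rewrite E1 F1 addSnnS; split=> //.
apply: (gc_trans (Wj k w j ++ nseq (j %/ k) Ub ++ (step (j %% k) U).1 ++ rho (j.+1 %% k) (wpow [:: w; u] l))).
  exact: Wj_swap.
rewrite catA E2 -catA; apply: gc_l.
by rewrite -addSnnS.
Qed.

Lemma L_uw w : w != u -> ~~ V2u E m u w -> forall l j,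
  fin (j %% k) (wpow [:: u; w] l) = (j + l) %% k /\
  PG (nseq (j %/ k) Ub ++ rho (j %% k) (wpow [:: u; w] l))
     (flatten [seq Wj k w i | i <- iota j.+1 l] ++ nseq ((j + l) %/ k) Ub).
Proof.
move=> Hw HV; elim=> [|l IH] j.
  by rewrite addn0 /= cats0; split=> //; exact: geq_refl.
rewrite wpow_S /=.
have [E1 E2] := stepU j.
rewrite E1 /= stepW //=.
have [F1 P1] := IH j.+1.
rewrite F1 addSnnS; split=> //.
rewrite catA E2.
apply: (gc_trans (Wj k w j.+1 ++ nseq (j.+1 %/ k) Ub ++ rho (j.+1 %% k) (wpow [:: u; w] l))).
  exact: Wj_swap.
rewrite -catA; apply: gc_l.
by rewrite -addSnnS.
Qed.

Lemma rho_alt_u b c : E u b -> c < k ->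
  fin c (alt u b (m u b)) = fin c (alt b u (m u b)) /\
  PG (rho c (alt u b (m u b))) (rho c (alt b u (m u b))).
Proof.
move=> Hub ck.
have Hb : b != u by apply/eqP => Hbu; rewrite Hbu HEirr in Hub.
case HV: (V2u E m u b).
  have /andP[_ /eqP m2] := HV.
  have Hs : step c U = if c.+1 < k then ([::], c.+1) else ([:: Ub], 0)
    by rewrite /step /= eqxx.
  rewrite m2 /alt /mkseq /= !(step_nonu _ _ Hb) HV /= Hs.
  case H: (c.+1 < k) => /=; first by split=> //; exact: geq_refl.
  split=> //; apply: geq_sym; apply: PG_rel; left; exists b; split=> //.
rewrite alt_even // alt_even' //.
set l := (m u b)./2.
have Hm : c %% k = c by rewrite modn_small.
have Hd : c %/ k = 0 by rewrite divn_small.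
have [F1 P1] := L_uw Hb (negbT HV) l c.
have [F2 P2] := L_wu Hb (negbT HV) l c.
rewrite Hm Hd /= in F1 P1 F2 P2.
rewrite F1 F2; split=> //.
apply: (gc_trans _ P1); apply: geq_sym; apply: (gc_trans _ P2).
apply: gc_r; apply: PG_rel.
right; right; right; right; exists b, c; split=> //.
by apply: Wset_E => //; rewrite HV.
Qed.

Lemma rho_rel c r s : c < k -> artin_rel E m r s ->
  fin c r = fin c s /\ PG (rho c r) (rho c s).
Proof.
move=> ck [a [b [Hab [-> ->]]]].
case: (eqVneq a u) => [Ha|Ha].
  by subst a; exact: rho_alt_u.
case: (eqVneq b u) => [Hb|Hb].
  subst b; have Hua : E u a by rewrite HEsym.
  have [F P] := rho_alt_u Hua ck.
  rewrite Hmsym; split; [by rewrite F | exact: geq_sym].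
exact: rho_alt_nonu.
Qed.

Lemma rho_resp g h : AG g h -> forall c, c < k ->
  fin c g = fin c h /\ PG (rho c g) (rho c h).
Proof.
elim=> {g h}.
- by move=> x c _; split=> //; exact: geq_refl.
- move=> x y _ IH c ck; have [F P] := IH c ck.
  by split; [rewrite F | exact: geq_sym].
- move=> x y z _ IH1 _ IH2 c ck.
  have [F1 P1] := IH1 c ck; have [F2 P2] := IH2 c ck.
  by split; [rewrite F1 | exact: geq_trans P2].
- move=> a b p c ck.
  rewrite !rho_cat !fin_cat.
  have [F P] := rho_free p (fin_lt a ck).
  rewrite F; split=> //.
  by have := gc_ctx (rho c a) (rho (fin c a) b) P.
- move=> a b r s H c ck.
  rewrite !rho_cat !fin_cat.
  have [F P] := rho_rel (fin_lt a ck) H.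
  rewrite F; split=> //.
  exact: gc_ctx.
Qed.

Lemma part3 x y : wf_word E m u k x -> wf_word E m u k y ->
  (AG (phi u k x) (phi u k y) <-> PG x y).
Proof.
move=> Hx Hy; split; last exact: phi_PG.
move=> H; have [_ P] := rho_resp H k0.
have [Rx _] := rho_phi Hx; have [Ry _] := rho_phi Hy.
by rewrite Rx Ry in P.
Qed.

Lemma main_sec :
  (forall x : word (plet V), wf_word E m u k x -> alpha u k (phi u k x) = 0%R)
  /\ (forall g : word V, alpha u k g = 0%R ->
     exists x : word (plet V), wf_word E m u k x /\ gcong (artin_rel E m) g (phi u k x))
  /\ (forall x y : word (plet V), wf_word E m u k x -> wf_word E m u k y ->
     (gcong (artin_rel E m) (phi u k x) (phi u k y) <-> gcong (pres_rel E m u k) x y)).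
Proof.
split; first exact: part1.
split; first exact: part2.
exact: part3.
Qed.
End Main.

Theorem theorem2p1 (V : finType) (E : rel V) (m : V -> V -> nat) (u : V) (k : nat)
  (HEsym : symmetric E) (HEirr : irreflexive E)
  (Hmsym : forall a b, m a b = m b a)
  (Hmeven : forall a b, E a b -> 2 <= m a b /\ ~~ odd (m a b))
  (hk : 2 <= k) :
  (* the generators lie in the kernel of alpha_{u,k} *)
  (forall x : word (plet V), wf_word E m u k x -> alpha u k (phi u k x) = 0%R)
  /\ (* they generate the kernel *)
  (forall g : word V, alpha u k g = 0%R ->
     exists x : word (plet V), wf_word E m u k x /\ gcong (artin_rel E m) g (phi u k x))
  /\ (* (R1)-(RB) are a complete set of defining relations *)
  (forall x y : word (plet V), wf_word E m u k x -> wf_word E m u k y ->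
     (gcong (artin_rel E m) (phi u k x) (phi u k y) <-> gcong (pres_rel E m u k) x y)).
Proof.
by apply: main_sec.
Qed.
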